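(* Let $I$ be a composition of $n$. For every $1\le i\le n-1$ and every $D\subseteq\{1,\dots,n\}$, $$T_i\,c_D\epsilon_I=\alpha(i,I,D)\,c_D\epsilon_I+\sum_{D'<_I D}\beta_{D'}\,c_{D'}\epsilon_I$$ for some scalars $\beta_{D'}$. Here $\alpha(i,I,D)\in\{0,-1\}$, and $\alpha(i,I,D)=-1$ exactly when either ($i+1\in D$ and $i\notin\operatorname{Des}(I)$) or ($i\notin D$ and $i\in\operatorname{Des}(I)$).
   Context: For a composition $I=(i_1,\dots,i_r)$ of $n$, $\operatorname{Des}(I)=\{i_1,i_1+i_2,\dots,i_1+\cdots+i_{r-1}\}\subseteq[1,n-1]$. $H_n(0)$ is the complex algebra generated by $T_1,\dots,T_{n-1}$ with $T_i^2=-T_i$, $T_iT_j=T_jT_i$ ($|i-j|>1$), and $T_iT_{i+1}T_i=T_{i+1}T_iT_{i+1}$. $Cl_n$ is generated by $c_1,\dots,c_n$ with $c_ic_j=-c_jc_i$ ($i\ne j$) and $c_i^2=-1$; for $D=\{d_1<\dots<d_k\}$, $c_D=c_{d_1}\cdots c_{d_k}$. $HCl_n(0)$ is the complex algebra generated by the $T_i$ and the $c_j$, with these relations together with $T_ic_j=c_jT_i$ ($j\ne i,i+1$), $T_ic_i=c_{i+1}T_i$, and $(T_i+1)c_{i+1}=c_i(T_i+1)$. $S_I=\mathbb{C}\epsilon_I$ is the one-dimensional $H_n(0)$-module with $T_j\epsilon_I=-\epsilon_I$ if $j\in\operatorname{Des}(I)$ and $T_j\epsilon_I=0$ otherwise.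 $M_I=HCl_n(0)\otimes_{H_n(0)}S_I$, which has basis $(c_D\epsilon_I)_{D\subseteq\{1,\dots,n\}}$. The partial order $\le_I$ on subsets of $\{1,\dots,n\}$ is the reflexive–transitive closure of the relations $D'\lessdot D$, which hold when, for some $1\le i\le n-1$, one of the following is true: (a) $i\notin\operatorname{Des}(I)$, $i\notin D$, $i+1\in D$, and $D'=(D\setminus\{i+1\})\cup\{i\}$; (b) $i\notin\operatorname{Des}(I)$, $i,i+1\in D$, and $D'=D\setminus\{i,i+1\}$; (c) $i\in\operatorname{Des}(I)$, $i\in D$, $i+1\notin D$, and $D'=(D\setminus\{i\})\cup\{i+1\}$; (d) $i\in\operatorname{Des}(I)$, $i,i+1\in D$, and $D'=D\setminus\{i,i+1\}$. We write $D'<_ID$ for $D'\le_ID$ with $D'\ne D$. *)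

(* Defs.v *)
From HB Require Import structures.
From mathcomp Require Import all_boot all_order all_algebra.
From mathcomp Require Import finmap.
From mathcomp Require Import complex.
From mathcomp Require Import Rstruct.
From Stdlib Require Reals.

Set Implicit Arguments.
Unset Strict Implicit.
Unset Printing Implicit Defensive.

Import Order.TTheory GRing.Theory Num.Theory.
Local Open Scope ring_scope.

Definition CC : Type := complex Rdefinitions.R.

Definition is_composition (n : nat) (I : seq nat) : Prop :=
  all (fun k => (0 < k)%N) I /\ sumn I = n.

Definition des (I : seq nat) : seq nat :=
  [seq sumn (take k I) | k <- iota 1 (size I).-1].

Definition cD (V : Type) (c : nat -> V -> V) (D : {fset nat}) (v : V) : V :=
  foldr (fun j w => c j w) v (sort leq (enum_fset D)).

Inductive coverI (I : seq nat) : {fset nat} -> {fset nat} -> Prop :=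
| coverI_a : forall (i : nat) (D : {fset nat}), (1 <= i <= (sumn I).-1)%N ->
    i \notin des I -> i \notin D -> i.+1 \in D ->
    coverI I ((D `\ i.+1) `|` [fset i])%fset D
| coverI_b : forall (i : nat) (D : {fset nat}), (1 <= i <= (sumn I).-1)%N ->
    i \notin des I -> i \in D -> i.+1 \in D ->
    coverI I (D `\` [fset i; i.+1])%fset D
| coverI_c : forall (i : nat) (D : {fset nat}), (1 <= i <= (sumn I).-1)%N ->
    i \in des I -> i \in D -> i.+1 \notin D ->
    coverI I ((D `\ i) `|` [fset i.+1])%fset D
| coverI_d : forall (i : nat) (D : {fset nat}), (1 <= i <= (sumn I).-1)%N ->
    i \in des I -> i \in D -> i.+1 \in D ->
    coverI I (D `\` [fset i; i.+1])%fset D.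
(* For a composition I of n, sumn I = n, so 1 <= i <= n-1. *)

Inductive leI (I : seq nat) : {fset nat} -> {fset nat} -> Prop :=
| leI_refl : forall D, leI I D D
| leI_step : forall D'' D' D, coverI I D'' D' -> leI I D' D -> leI I D'' D.

Definition ltI (I : seq nat) (D' D : {fset nat}) : Prop := leI I D' D /\ D' <> D.

Definition alpha (i : nat) (I : seq nat) (D : {fset nat}) : CC :=
  if ((i.+1 \in D) && (i \notin des I)) || ((i \notin D) && (i \in des I))
  then -1 else 0.

(* A left HCl_n(0)-module structure on a C-vector space V, given by the
   actions of the generators T_i (1 <= i <= n-1) and c_j (1 <= j <= n). *)
Definition HCl_module (n : nat) (V : lmodType CC)
    (T c : nat -> V -> V) : Prop :=
  (forall i (a : CC) (u v : V), T i (a *: u + v) = a *: T i u + T i v) /\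
  (forall j (a : CC) (u v : V), c j (a *: u + v) = a *: c j u + c j v) /\
  (forall i v, (1 <= i <= n.-1)%N -> T i (T i v) = - T i v) /\
  (forall i j v, (1 <= i <= n.-1)%N -> (1 <= j <= n.-1)%N ->
     (i.+1 < j)%N \/ (j.+1 < i)%N -> T i (T j v) = T j (T i v)) /\
  (forall i v, (1 <= i)%N -> (i.+1 <= n.-1)%N ->
     T i (T i.+1 (T i v)) = T i.+1 (T i (T i.+1 v))) /\
  (forall i j v, (1 <= i <= n)%N -> (1 <= j <= n)%N -> i <> j ->
     c i (c j v) = - c j (c i v)) /\
  (forall i v, (1 <= i <= n)%N -> c i (c i v) = - v) /\
  (forall i j v, (1 <= i <= n.-1)%N -> (1 <= j <= n)%N -> j <> i -> j <> i.+1 ->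
     T i (c j v) = c j (T i v)) /\
  (forall i v, (1 <= i <= n.-1)%N -> T i (c i v) = c i.+1 (T i v)) /\
  (forall i v, (1 <= i <= n.-1)%N ->
     T i (c i.+1 v) + c i.+1 v = c i (T i v) + c i v).

(* eps spans a copy of S_I inside V (as H_n(0)-module). *)
Definition S_I_vector (n : nat) (I : seq nat) (V : lmodType CC)
    (T : nat -> V -> V) (eps : V) : Prop :=
  forall j, (1 <= j <= n.-1)%N ->
    T j eps = (if j \in des I then - eps else 0).

(* Main.v *)
Require Import Defs.
From HB Require Import structures.
From mathcomp Require Import all_boot all_order all_algebra.
From mathcomp Require Import finmap complex Rstruct.
From Stdlib Require Reals.
From mathcomp Require Import zify.
Import GRing.Theory.
Local Open Scope ring_scope.

Lemma sort_ltn (E : {fset nat}) : sorted ltn (sort leq (enum_fset E)).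
Proof.
rewrite ltn_sorted_uniq_leq sort_uniq fset_uniq /=.
apply: sort_sorted; exact: leq_total.
Qed.

Lemma sortE (E : {fset nat}) L : sorted ltn L ->
  (forall x, (x \in E) = (x \in L)) -> sort leq (enum_fset E) = L.
Proof.
move=> sL HE; apply: (irr_sorted_eq ltn_trans ltnn (sort_ltn E) sL) => x.
by rewrite mem_sort -HE.
Qed.

Definition Apart (D : {fset nat}) i := [seq k <- sort leq (enum_fset D) | (k < i)%N].
Definition Bpart (D : {fset nat}) i := [seq k <- sort leq (enum_fset D) | (i.+1 < k)%N].

Lemma decomp (D E : {fset nat}) i Xc : sorted ltn Xc ->
  (forall x, x \in Xc -> (i <= x <= i.+1)%N) ->
  (forall x, (x \in E) = if (x < i)%N then x \in D else if (x <= i.+1)%N then x \in Xc else x \in D) ->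
  sort leq (enum_fset E) = Apart D i ++ Xc ++ Bpart D i.
Proof.
move=> sX aX HE; apply: sortE.
  rewrite sorted_pairwise; last exact: ltn_trans.
  rewrite !pairwise_cat -!sorted_pairwise; try exact: ltn_trans.
  rewrite sX !(sorted_filter ltn_trans _ (sort_ltn D)) /= !andbT.
  apply/andP; split.
  - apply/allrelP => x y; rewrite mem_filter => /andP[hx _].
    rewrite mem_cat mem_filter => /orP[/aX|/andP[hy _]]; lia.
  - apply/allrelP => x y /aX hx; rewrite mem_filter => /andP[hy _]; lia.
move=> x; rewrite HE !mem_cat !mem_filter mem_sort.
have xD : (x \in enum_fset D) = (x \in D) by [].
rewrite xD.
case: (ltnP x i) => h1.
  have -> : (x \in Xc) = false by apply/negP => /aX; lia.
  have -> : (i.+1 < x)%N = false by lia.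
  by rewrite /= orbF.
case: (leqP x i.+1) => h2.
  by rewrite /= orbF.
have -> : (x \in Xc) = false by apply/negP => /aX; lia.
by [].
Qed.

Section Lin.
Variable V : lmodType CC.
Variable f : V -> V.
Hypothesis H : forall (a : CC) u v, f (a *: u + v) = a *: f u + f v.
Lemma linD u v : f (u + v) = f u + f v.
Proof. by have := H 1 u v; rewrite !scale1r. Qed.
Lemma lin0 : f 0 = 0.
Proof. by apply: (@addrI _ (f 0)); rewrite -linD !addr0. Qed.
Lemma linZ a u : f (a *: u) = a *: f u.
Proof. by rewrite -[a *: u]addr0 H lin0 addr0. Qed.
Lemma linN u : f (- u) = - f u.
Proof. by rewrite -scaleN1r linZ scaleN1r. Qed.
Lemma linB u v : f (u - v) = f u - f v.
Proof. by rewrite linD linN. Qed.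
End Lin.

Lemma HEgen (D E : {fset nat}) i (Xc : seq nat) :
  (forall x, x != i -> x != i.+1 -> (x \in E) = (x \in D)) ->
  (i \in E) = (i \in Xc) -> (i.+1 \in E) = (i.+1 \in Xc) ->
  forall x, (x \in E) = if (x < i)%N then x \in D else if (x <= i.+1)%N then x \in Xc else x \in D.
Proof.
move=> H1 Hi Hi1 x; case: (ltnP x i) => h1.
  by apply: H1; apply/eqP; lia.
case: (leqP x i.+1) => h2.
  by have [->|->] : x = i \/ x = i.+1 by lia.
by apply: H1; apply/eqP; lia.
Qed.

Theorem mainTheorem7 (n : nat) (I : seq nat) (V : lmodType CC)
    (T c : nat -> V -> V) (eps : V) :
  is_composition n I ->
  HCl_module n T c ->
  S_I_vector n I T eps ->
  forall (i : nat) (D : {fset nat}),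
    (1 <= i <= n.-1)%N -> {subset D <= [pred k : nat | (1 <= k <= n)%N]} ->
    exists (s : seq {fset nat}) (beta : {fset nat} -> CC),
      (forall D', D' \in s -> ltI I D' D) /\
      T i (cD c D eps) =
        alpha i I D *: cD c D eps + \sum_(D' <- s) beta D' *: cD c D' eps.
Proof.
move=> [_ sumI] [TL [cL [TT [Tcomm [Tbraid [cc [c2 [Tc [Tci Tci1]]]]]]]]] SI i D hi hD.
have hin : (1 <= i <= n)%N by lia.
have hi1n : (1 <= i.+1 <= n)%N by lia.
have hisum : (1 <= i <= (sumn I).-1)%N by rewrite sumI.
have memA : forall x, x \in Apart D i -> (1 <= x)%N && (x < i)%N.
  move=> x; rewrite mem_filter mem_sort => /andP[h1 h2].
  by have := hD x h2; rewrite inE => /andP[-> _]; rewrite h1.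
have memB : forall x, x \in Bpart D i -> (i.+1 < x)%N && (x <= n)%N.
  move=> x; rewrite mem_filter mem_sort => /andP[h1 h2].
  by have := hD x h2; rewrite inE => /andP[_ ->]; rewrite h1.
pose aF w := foldr c w (Apart D i).
pose wB := foldr c eps (Bpart D i).
have linF : forall L (a : CC) u v, foldr c (a *: u + v) L = a *: foldr c u L + foldr c v L.
  by elim=> [//|x L IH] a u v /=; rewrite IH cL.
have cLin : forall j (a : CC) u v, c j (a *: u + v) = a *: c j u + c j v by [].
have TA : forall w, T i (aF w) = aF (T i w).
  rewrite /aF; move: memA; elim: (Apart D i) => [//|x L IH] HL w /=.
  have /andP[h1 h2] := HL x (mem_head _ _).
  rewrite Tc; first by rewrite IH // => y hy; apply: HL; rewrite inE hy orbT.
  - exact: hi.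
  - by rewrite h1 /=; lia.
  - lia.
  - lia.
have TB : T i wB = if i \in des I then - wB else 0.
  rewrite /wB; move: memB; elim: (Bpart D i) => [|x L IH] HL /=.
    exact: SI.
  have /andP[h1 h2] := HL x (mem_head _ _).
  rewrite Tc //; last 3 first.
  - by apply/andP; split; lia.
  - lia.
  - lia.
  rewrite IH; last by move=> y hy; apply: HL; rewrite inE hy orbT.
  by case: (i \in des I); [rewrite (@linN _ _ (cLin x)) | rewrite (@lin0 _ _ (cLin x))].
have key : forall (E : {fset nat}) (Xc : seq nat), sorted ltn Xc -> (forall x, x \in Xc -> (i <= x <= i.+1)%N) ->
    (forall x, x != i -> x != i.+1 -> (x \in E) = (x \in D)) ->
    (i \in E) = (i \in Xc) -> (i.+1 \in E) = (i.+1 \in Xc) ->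
    cD c E eps = aF (foldr c wB Xc).
  move=> E Xc sX aX H1 H2 H3.
  by rewrite /cD (@decomp D E i Xc sX aX (@HEgen D E i Xc H1 H2 H3)) !foldr_cat.
have aFlin : forall (a : CC) u v, aF (a *: u + v) = a *: aF u + aF v by move=> *; apply: linF.
have neq1 : (i.+1 == i) = false by apply/eqP; lia.
have neq2 : (i == i.+1) = false by apply/eqP; lia.
have ltI1 : forall D', coverI I D' D -> D' <> D -> forall D0, D0 \in [:: D'] -> ltI I D0 D.
  move=> D' cv ne D0; rewrite inE => /eqP ->; split => //.
  exact: leI_step cv (leI_refl _ _).
have ne : i.+1 <> i by lia.
have Tci1' : forall v, T i (c i.+1 v) = c i (T i v) + c i v - c i.+1 v.
  by move=> v; rewrite -(Tci1 i v hi) addrK.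
have cN := fun j => @linN _ _ (cLin j).
have c0 := fun j => @lin0 _ _ (cLin j).
have cAdd := fun j => @linD _ _ (cLin j).
have cB := fun j => @linB _ _ (cLin j).
have aN := @linN _ aF aFlin.
have a0 := @lin0 _ aF aFlin.
have aAdd := @linD _ aF aFlin.
have aB := @linB _ aF aFlin.
have s0 : sorted ltn [::] by [].
have s1 : forall k, sorted ltn [:: k] by [].
have s2 : sorted ltn [:: i; i.+1] by rewrite /= ltnSn.
have r0 : forall x, x \in [::] -> (i <= x <= i.+1)%N by [].
have r1 : forall x, x \in [:: i] -> (i <= x <= i.+1)%N.
  by move=> x; rewrite inE => /eqP ->; lia.
have r1' : forall x, x \in [:: i.+1] -> (i <= x <= i.+1)%N.
  by move=> x; rewrite inE => /eqP ->; lia.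
have r2 : forall x, x \in [:: i; i.+1] -> (i <= x <= i.+1)%N.
  by move=> x; rewrite !inE => /orP[/eqP->|/eqP->]; lia.
have HDD : forall x, x != i -> x != i.+1 -> (x \in D) = (x \in D) by [].
rewrite /alpha.
case hdes : (i \in des I); rewrite hdes in TB.
all: case hiD : (i \in D); case hi1D : (i.+1 \in D) => /=.
-
  have HD : cD c D eps = aF (foldr c wB [:: i; i.+1]).
    apply: (key D _ s2 r2) => //.
    - by rewrite !inE eqxx hiD.
    - by rewrite !inE eqxx hi1D orbT.
  pose D' := (D `\` [fset i; i.+1])%fset.
  have HD' : cD c D' eps = aF (foldr c wB [::]).
    apply: (key D' _ s0 r0).
    - by move=> x h1 h2; rewrite !inE (negbTE h1) (negbTE h2).
    - by rewrite !inE eqxx.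
    - by rewrite !inE eqxx orbT.
  exists [:: D'], (fun _ => 1); split.
    apply: ltI1; first exact: coverI_d.
    by move/(congr1 (fun E : {fset nat} => i \in E)); rewrite !inE eqxx hiD.
  rewrite big_seq1 scale0r add0r scale1r HD HD' /= TA Tci // Tci1' TB.
  by rewrite cN addNr add0r cN c2 // opprK.
-
  have HD : cD c D eps = aF (foldr c wB [:: i]).
    apply: (key D _ (s1 i) r1) => //.
    - by rewrite !inE eqxx hiD.
    - by rewrite !inE neq1 hi1D.
  pose D' := ((D `\ i) `|` [fset i.+1])%fset.
  have HD' : cD c D' eps = aF (foldr c wB [:: i.+1]).
    apply: (key D' _ (s1 i.+1) r1').
    - by move=> x h1 h2; rewrite !inE (negbTE h1) (negbTE h2) /= orbF.
    - by rewrite !inE eqxx neq2.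
    - by rewrite !inE eqxx orbT.
  exists [:: D'], (fun _ => -1); split.
    apply: ltI1; first exact: (coverI_c hisum hdes hiD (negbT hi1D)).
    by move/(congr1 (fun E : {fset nat} => i \in E)); rewrite !inE eqxx neq2 hiD.
  by rewrite big_seq1 scale0r add0r scaleN1r HD HD' /= TA Tci // TB cN aN.
-
  have HD : cD c D eps = aF (foldr c wB [:: i.+1]).
    apply: (key D _ (s1 i.+1) r1') => //.
    - by rewrite !inE neq2 hiD.
    - by rewrite !inE eqxx hi1D.
  exists [::], (fun _ => 0); split => //.
  by rewrite big_nil addr0 scaleN1r HD /= TA Tci1' TB cN addNr add0r aN.
-
  have HD : cD c D eps = aF (foldr c wB [::]).
    by apply: (key D _ s0 r0) => //; rewrite ?hiD ?hi1D.
  exists [::], (fun _ => 0); split => //.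
  by rewrite big_nil addr0 scaleN1r HD /= TA TB aN.
-
  have HD : cD c D eps = aF (foldr c wB [:: i; i.+1]).
    apply: (key D _ s2 r2) => //.
    - by rewrite !inE eqxx hiD.
    - by rewrite !inE eqxx hi1D orbT.
  pose D' := (D `\` [fset i; i.+1])%fset.
  have HD' : cD c D' eps = aF (foldr c wB [::]).
    apply: (key D' _ s0 r0).
    - by move=> x h1 h2; rewrite !inE (negbTE h1) (negbTE h2).
    - by rewrite !inE eqxx.
    - by rewrite !inE eqxx orbT.
  exists [:: D'], (fun _ => 1); split.
    apply: ltI1; first exact: (coverI_b hisum (negbT hdes) hiD hi1D).
    by move/(congr1 (fun E : {fset nat} => i \in E)); rewrite !inE eqxx hiD.
  rewrite big_seq1 scaleN1r scale1r HD HD' /= TA Tci // Tci1' TB.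
  by rewrite c0 add0r cB c2 // opprK (cc i.+1 i _ hi1n hin ne) aAdd aN.
-
  have HD : cD c D eps = aF (foldr c wB [:: i]).
    apply: (key D _ (s1 i) r1) => //.
    - by rewrite !inE eqxx hiD.
    - by rewrite !inE neq1 hi1D.
  exists [::], (fun _ => 0); split => //.
  by rewrite big_nil addr0 scale0r HD /= TA Tci // TB c0 a0.
-
  have HD : cD c D eps = aF (foldr c wB [:: i.+1]).
    apply: (key D _ (s1 i.+1) r1') => //.
    - by rewrite !inE neq2 hiD.
    - by rewrite !inE eqxx hi1D.
  pose D' := ((D `\ i.+1) `|` [fset i])%fset.
  have HD' : cD c D' eps = aF (foldr c wB [:: i]).
    apply: (key D' _ (s1 i) r1).
    - by move=> x h1 h2; rewrite !inE (negbTE h1) (negbTE h2) /= orbF.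
    - by rewrite !inE eqxx orbT.
    - by rewrite !inE eqxx neq1.
  exists [:: D'], (fun _ => 1); split.
    apply: ltI1; first exact: (coverI_a hisum (negbT hdes) (negbT hiD) hi1D).
    by move/(congr1 (fun E : {fset nat} => i \in E)); rewrite !inE eqxx orbT hiD.
  rewrite big_seq1 scaleN1r scale1r HD HD' /= TA Tci1' TB.
  by rewrite c0 add0r aB addrC.
-
  have HD : cD c D eps = aF (foldr c wB [::]).
    by apply: (key D _ s0 r0) => //; rewrite ?hiD ?hi1D.
  exists [::], (fun _ => 0); split => //.
  by rewrite big_nil addr0 scale0r HD /= TA TB a0.
Qed.
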